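(* The edge set of the complete 4-partite graph $K_{4,4,4,4}$ can be partitioned into 2 subgraphs, each isomorphic to the Shrikhande graph.
   Context: The Shrikhande graph is the Cayley graph on the group $\mathbb{Z}_4 \times \mathbb{Z}_4$ with connection set $\{\pm(1,0), \pm(0,1), \pm(1,1)\}$. It is a 6-regular graph on 16 vertices with 48 edges. $K_{4,4,4,4}$ is the complete multipartite graph with four parts, each of size 4. *)

(* Defs.v *)
From mathcomp Require Import all_boot all_order.
Set Implicit Arguments. Unset Strict Implicit. Unset Printing Implicit Defensive.

(* Vertices of K_{4,4,4,4}: (part, index within part). *)
Definition K4444_V := ('I_4 * 'I_4)%type.
Definition K4444_adj : rel K4444_V := fun u v => u.1 != v.1.

(* Shrikhande graph: Cayley graph on Z_4 x Z_4, connection set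
   {±(1,0), ±(0,1), ±(1,1)}; arithmetic mod 4 on 'I_4. *)
Definition Shr_V := ('I_4 * 'I_4)%type.
Definition z4sub (a b : 'I_4) : nat := (a + 4 - b) %% 4.
Definition in_conn (d : nat * nat) : bool :=
  d \in [:: (1, 0); (3, 0); (0, 1); (0, 3); (1, 1); (3, 3)].
Definition shrikhande_adj : rel Shr_V :=
  fun x y => in_conn (z4sub y.1 x.1, z4sub y.2 x.2).

Definition graph_iso (T1 T2 : finType) (e1 : rel T1) (e2 : rel T2) : Prop :=
  exists f : T1 -> T2, bijective f /\ forall x y, e2 (f x) (f y) = e1 x y.

(* Main.v *)
Require Import Defs.
From mathcomp Require Import all_boot all_order.
From mathcomp Require Import zify.

Definition enc (x : ('I_4 * 'I_4)%type) : nat := 4 * x.1 + x.2.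
Definition dec (n : nat) : ('I_4 * 'I_4)%type :=
  (Ordinal (ltn_pmod (n %/ 4) (erefl : 0 < 4)), Ordinal (ltn_pmod n (erefl : 0 < 4))).
Definition mk (t : seq nat) (x : ('I_4 * 'I_4)%type) : ('I_4 * 'I_4)%type :=
  dec (nth 0 t (enc x)).

Definition f1 := mk [:: 0; 4; 1; 5; 8; 12; 9; 13; 2; 6; 3; 7; 10; 14; 11; 15].
Definition h1 := mk [:: 0; 2; 8; 10; 1; 3; 9; 11; 4; 6; 12; 14; 5; 7; 13; 15].
Definition f2 := mk [:: 0; 9; 2; 11; 13; 6; 15; 4; 3; 10; 1; 8; 14; 5; 12; 7].
Definition h2 := mk [:: 0; 10; 2; 8; 7; 13; 5; 15; 11; 1; 9; 3; 14; 4; 12; 6].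

Definition E1 : rel K4444_V := fun u v => shrikhande_adj (h1 u) (h1 v).
Definition E2 : rel K4444_V := fun u v => K4444_adj u v && ~~ E1 u v.

Lemma decK x : dec (enc x) = x.
Proof.
case: x => [a b]; rewrite /dec /enc /=.
have Ha := ltn_ord a; have Hb := ltn_ord b.
congr pair; apply: val_inj => /=; lia.
Qed.

Lemma enc_lt x : enc x < 16.
Proof. case: x => [a b]; rewrite /enc /=; have := ltn_ord a; have := ltn_ord b; lia. Qed.

Lemma all1 (P : pred ('I_4 * 'I_4)%type) :
  all (fun n => P (dec n)) (iota 0 16) -> forall x, P x.
Proof.
move=> /allP H x; rewrite -(decK x); apply: H.
by rewrite mem_iota add0n enc_lt.
Qed.

Lemma all2 (P : ('I_4 * 'I_4)%type -> pred ('I_4 * 'I_4)%type) :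
  all (fun n => all (fun m => P (dec n) (dec m)) (iota 0 16)) (iota 0 16) ->
  forall x y, P x y.
Proof.
move=> H x; apply: all1; move: x; apply: all1.
apply/allP => n Hn; move/allP: H => /(_ n Hn) /allP H.
by apply/allP => m Hm; apply: H.
Qed.

Lemma c1 : cancel f1 h1.
Proof. move=> x; apply/eqP; move: x; apply: all1; by vm_compute. Qed.
Lemma c1' : cancel h1 f1.
Proof. move=> x; apply/eqP; move: x; apply: all1; by vm_compute. Qed.
Lemma c2 : cancel f2 h2.
Proof. move=> x; apply/eqP; move: x; apply: all1; by vm_compute. Qed.
Lemma c2' : cancel h2 f2.
Proof. move=> x; apply/eqP; move: x; apply: all1; by vm_compute. Qed.

Lemma symE1 : symmetric E1.
Proof. move=> x y; apply/eqP; move: x y; apply: all2; by vm_compute. Qed.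
Lemma subE1 : forall u v, E1 u v ==> K4444_adj u v.
Proof. apply: all2; by vm_compute. Qed.
Lemma isoE2 : forall x y, E2 (f2 x) (f2 y) == shrikhande_adj x y.
Proof. apply: all2; by vm_compute. Qed.

Theorem lemma2p2 :
  exists E1 E2 : rel K4444_V,
    [/\ symmetric E1 /\ symmetric E2,
        (forall u v, K4444_adj u v = E1 u v || E2 u v),
        (forall u v, ~~ (E1 u v && E2 u v)),
        graph_iso shrikhande_adj E1
      & graph_iso shrikhande_adj E2].
Proof.
exists E1, E2; split.
- split; first exact: symE1.
  move=> x y; rewrite /E2 symE1 /K4444_adj eq_sym //.
- move=> u v; rewrite /E2; have := subE1 u v.
  by case: (E1 u v); case: (K4444_adj u v).
- by move=> u v; rewrite /E2; case: (E1 u v); rewrite ?andbF.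
- exists f1; split; first exact: (Bijective c1 c1').
  by move=> x y; rewrite /E1 !c1.
- exists f2; split; first exact: (Bijective c2 c2').
  by move=> x y; apply/eqP; apply: isoE2.
Qed.
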